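(* Let $P$ be a Poisson tensor on $\mathbb{R}^3$, let $H\in C^\infty(\mathbb{R}^3)$, let $S\in C^\infty(\mathbb{R}^3)$ satisfy $PdS=0$, and let $g$ be the symmetric tensor with components $g^{ij}=H^iH^j-\delta^{ij}\sum_k H^kH^k$. If $x$ is a regular point of $P$ (i.e. $P(x)\neq 0$) with $d_xS\neq 0$, then $g\,d_xS=0$ if and only if $P\,d_xH=0$.
   Context: $\mathbb{R}^3$ carries the standard Euclidean metric, used to identify tangent and cotangent spaces with $\mathbb{R}^3$; $H^i=H_i=\partial H/\partial x^i$. A Poisson tensor is a skew-symmetric bivector field satisfying the Jacobi identity. *)

(* Defs.v *)
From HB Require Import structures.
From mathcomp Require Import all_boot all_order all_algebra.
From mathcomp Require Import all_classical all_reals all_analysis.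
Set Implicit Arguments. Unset Strict Implicit. Unset Printing Implicit Defensive.
Import Order.TTheory GRing.Theory Num.Theory.
Import numFieldNormedType.Exports.
Local Open Scope ring_scope.

Section Defs.
Variable R : realType.
Local Notation V := 'rV[R]_3.

Definition ebasis (i : 'I_3) : V := delta_mx 0 i.

Definition partial (i : 'I_3) (f : V -> R) (x : V) : R := 'D_(ebasis i) f x.

(* gradient (= differential d_x f identified with R^3 via the Euclidean metric),
   as a column vector, so that a bivector/matrix acts on it by  *m  *)
Definition grad (f : V -> R) (x : V) : 'cV[R]_3 := \col_i partial i f x.

Fixpoint Ck (k : nat) (f : V -> R) : Prop :=
  match k with
  | 0 => continuous f
  | k'.+1 => (forall x, differentiable f x) /\ (forall i, Ck k' (partial i f))
  end.
Definition smooth (f : V -> R) : Prop := forall k, Ck k f.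

Definition poisson_tensor (P : V -> 'M[R]_3) : Prop :=
  [/\ (forall i j, smooth (fun x => P x i j)),
      (forall x i j, P x i j = - P x j i) &
      (forall x i j k,
         \sum_(l < 3) (P x i l * partial l (fun y => P y j k) x
                     + P x j l * partial l (fun y => P y k i) x
                     + P x k l * partial l (fun y => P y i j) x) = 0)].

Definition gtensor (H : V -> R) (x : V) : 'M[R]_3 :=
  \matrix_(i, j) (partial i H x * partial j H x
                  - (i == j)%:R * \sum_(k < 3) partial k H x * partial k H x).
End Defs.

(* Main.v *)
Require Import Defs.
From HB Require Import structures.
From mathcomp Require Import all_boot all_order all_algebra.
From mathcomp Require Import all_classical all_reals all_analysis.
From mathcomp Require Import ring lra.
Import Order.TTheory GRing.Theory Num.Theory.
Local Open Scope ring_scope.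

Lemma sq3 (R : realFieldType) (x y z : R) : x^+2 + y^+2 + z^+2 = 0 -> [/\ x = 0, y = 0 & z = 0].
Proof.
move=> E; have hx := sqr_ge0 x; have hy := sqr_ge0 y; have hz := sqr_ge0 z.
have ex : x^+2 = 0 by lra. have ey : y^+2 = 0 by lra. have ez : z^+2 = 0 by lra.
by split; apply/eqP; rewrite -sqrf_eq0; apply/eqP.
Qed.

Lemma crossA (R : realFieldType) (h0 h1 h2 s0 s1 s2 : R) :
  let w0 := h1 * s2 - h2 * s1 in let w1 := h2 * s0 - h0 * s2 in let w2 := h0 * s1 - h1 * s0 in
  (h1 * w2 - h2 * w1 = 0 /\ h2 * w0 - h0 * w2 = 0 /\ h0 * w1 - h1 * w0 = 0) <->
  (w0 = 0 /\ w1 = 0 /\ w2 = 0).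
Proof.
move=> w0 w1 w2; split; last first.
  by case=> e0 [e1 e2]; rewrite e0 e1 e2; split; [|split]; ring.
case=> g0 [g1 g2].
have L : (h0^+2 + h1^+2 + h2^+2)  *  (w0^+2 + w1^+2 + w2^+2) =
  (h1 * w2 - h2 * w1)^+2 + (h2 * w0 - h0 * w2)^+2 + (h0 * w1 - h1 * w0)^+2 + (h0 * w0+h1 * w1+h2 * w2)^+2
  by ring.
have D : h0 * w0+h1 * w1+h2 * w2 = 0 by rewrite /w0 /w1 /w2; ring.
rewrite g0 g1 g2 D expr0n /= !addr0 in L.
move/eqP: L; rewrite mulf_eq0 => /orP[/eqP|/eqP] /sq3 [e0 e1 e2].
  by rewrite /w0 /w1 /w2 e0 e1 e2; split; [|split]; ring.
by [].
Qed.

Lemma par (R : realFieldType) (p0 p1 p2 s0 s1 s2 : R) :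
  (p0 != 0 \/ p1 != 0 \/ p2 != 0) -> (s0 != 0 \/ s1 != 0 \/ s2 != 0) ->
  (s1  *  p2 - s2  *  p1 = 0) -> (s2  *  p0 - s0  *  p2 = 0) -> (s0  *  p1 - s1  *  p0 = 0) ->
  exists mu, [/\ mu != 0, p0 = mu * s0, p1 = mu * s1 & p2 = mu * s2].
Proof.
move=> hp hs e0 e1 e2.
have key : forall k0 k1 k2 q0 q1 q2 : R, k0 != 0 -> (q0 != 0 \/ q1 != 0 \/ q2 != 0) ->
   k1 * q0 = k0 * q1 -> k2 * q0 = k0 * q2 ->
   exists mu, [/\ mu != 0, q0 = mu * k0, q1 = mu * k1 & q2 = mu * k2].
  move=> k0 k1 k2 q0 q1 q2 nm hq f1 f2; exists (q0/k0); split.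
  - rewrite mulf_eq0 negb_or invr_eq0 nm andbT; apply/negP=> /eqP q00.
    have q10 : q1 = 0 by move: f1; rewrite q00 mulr0 => /esym/eqP; rewrite mulf_eq0 (negbTE nm) => /eqP.
    have q20 : q2 = 0 by move: f2; rewrite q00 mulr0 => /esym/eqP; rewrite mulf_eq0 (negbTE nm) => /eqP.
    by move: hq; rewrite q00 q10 q20 eqxx; case=> [|[]].
  - by field.
  - by rewrite -mulrA mulrC -mulrA f1; field.
  - by rewrite -mulrA mulrC -mulrA f2; field.
case: hs => [h0|[h1|h2]].
- apply: key => //; lra.
- have [mu [k1 k2 m3 m4]] := key s1 s0 s2 p1 p0 p2 h1 ltac:(tauto) ltac:(lra) ltac:(lra).
  by exists mu.
- have [mu [k1 k2 m3 m4]] := key s2 s0 s1 p2 p0 p1 h2 ltac:(tauto) ltac:(lra) ltac:(lra).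
  by exists mu.
Qed.

Section M.
Variable R : realType.
Definition i0 : 'I_3 := @Ordinal 3 0 isT.
Definition i1 : 'I_3 := @Ordinal 3 1 isT.
Definition i2 : 'I_3 := @Ordinal 3 2 isT.

Lemma ord3P (Q : 'I_3 -> Prop) : Q i0 -> Q i1 -> Q i2 -> forall i, Q i.
Proof.
move=> a b c [[|[|[|k]]] Hk] //.
- by rewrite (_ : Ordinal Hk = i0) //; apply: val_inj.
- by rewrite (_ : Ordinal Hk = i1) //; apply: val_inj.
- by rewrite (_ : Ordinal Hk = i2) //; apply: val_inj.
Qed.

Lemma col3 (v : 'cV[R]_3) : v = 0 <-> [/\ v i0 0 = 0, v i1 0 = 0 & v i2 0 = 0].
Proof.
split; first by move=> ->; rewrite !mxE.
case=> a b c; apply/matrixP => i j; rewrite (ord1 j) mxE.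
by move: i; apply: ord3P.
Qed.

Lemma mul3 (M : 'M[R]_3) (v : 'cV[R]_3) i :
  (M *m v) i 0 = M i i0 * v i0 0 + M i i1 * v i1 0 + M i i2 * v i2 0.
Proof.
rewrite mxE !big_ord_recl big_ord0 addr0 addrA.
by congr (M i _ * v _ 0 + M i _ * v _ 0 + M i _ * v _ 0); apply: val_inj.
Qed.
End M.

Theorem mainTheorem7 (R : realType) (P : 'rV[R]_3 -> 'M[R]_3) (H S : 'rV[R]_3 -> R) :
  poisson_tensor P -> smooth H -> smooth S ->
  (forall y, P y *m grad S y = 0) ->
  forall x : 'rV[R]_3, P x != 0 -> grad S x != 0 ->
  (gtensor H x *m grad S x = 0 <-> P x *m grad H x = 0).
Proof.
move=> [_ skew _] _ _ hPS x nP nS.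
have Pd : forall i, P x i i = 0.
  move=> i; have := skew x i i; move/eqP; rewrite -subr_eq0 opprK -mulr2n.
  by rewrite mulrn_eq0 /= => /eqP.
set a := P x i0 i1; set b := P x i0 i2; set c := P x i1 i2.
have hp : c != 0 \/ - b != 0 \/ a != 0.
  case: (boolP (a == 0)) => [/eqP a0|]; last by auto.
  case: (boolP (b == 0)) => [/eqP b0|]; last by rewrite oppr_eq0; auto.
  case: (boolP (c == 0)) => [/eqP c0|]; last by auto.
  exfalso; move/negP: nP; apply; apply/eqP/matrixP.
  apply: ord3P; apply: ord3P; rewrite mxE ?Pd //;
  rewrite ?(skew x i1 i0) ?(skew x i2 i0) ?(skew x i2 i1) -/a -/b -/c ?a0 ?b0 ?c0 ?oppr0 //.
set s0 := partial i0 S x; set s1 := partial i1 S x; set s2 := partial i2 S x.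
set h0 := partial i0 H x; set h1 := partial i1 H x; set h2 := partial i2 H x.
have hs : s0 != 0 \/ s1 != 0 \/ s2 != 0.
  case: (boolP (s0 == 0)) => [/eqP a0|]; last by auto.
  case: (boolP (s1 == 0)) => [/eqP b0|]; last by auto.
  case: (boolP (s2 == 0)) => [/eqP c0|]; last by auto.
  exfalso; move/negP: nS; apply; apply/eqP/col3; rewrite !mxE; split => //.
have := hPS x; rewrite col3 !mul3 !mxE -/s0 -/s1 -/s2.
rewrite ?Pd (skew x i1 i0) (skew x i2 i0) (skew x i2 i1) -/a -/b -/c.
case=> e0 e1 e2.
have [mu [mu0 E0 E1 E2]] := @par R _ _ _ _ _ _ hp hs ltac:(lra) ltac:(lra) ltac:(lra).
rewrite !col3 !mul3 !mxE -/s0 -/s1 -/s2 -/h0 -/h1 -/h2.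
rewrite ?Pd (skew x i1 i0) (skew x i2 i0) (skew x i2 i1) -/a -/b -/c /=.
have Sm : \sum_(k < 3) partial k H x * partial k H x = h0*h0 + h1*h1 + h2*h2.
  rewrite !big_ord_recl big_ord0 addr0 addrA /h0 /h1 /h2.
  by congr (partial _ H x * partial _ H x + partial _ H x * partial _ H x + partial _ H x * partial _ H x); apply: val_inj.
rewrite Sm.
have Eb : b = - (mu * s1) by rewrite -E1 opprK.
rewrite Eb E0 E2.
have [cA1 cA2] := @crossA R h0 h1 h2 s0 s1 s2; move: cA1 cA2 => /= cA1 cA2.
have F : forall u v : R, u = v -> (u = 0 <-> v = 0) by move=> u v ->.
have M : forall u : R, mu * u = 0 <-> u = 0.
  move=> u; split; last by move=> ->; rewrite mulr0.
  by move/eqP; rewrite mulf_eq0 (negbTE mu0) /= => /eqP.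
split.
- case=> g0 g1 g2.
  have [w0 [w1 w2]] : (h1 * (h0 * s1 - h1 * s0) - h2 * (h2 * s0 - h0 * s2) = 0) /\ (h2 * (h1 * s2 - h2 * s1) - h0 * (h0 * s1 - h1 * s0) = 0) /\ (h0 * (h2 * s0 - h0 * s2) - h1 * (h1 * s2 - h2 * s1) = 0).
    split; [|split].
    + by rewrite -g0; ring.
    + by rewrite -g1; ring.
    + by rewrite -g2; ring.
  have [z0 [z1 z2]] := cA1 (conj w0 (conj w1 w2)).
  split.
  + apply: (eq_trans (_ : _ = mu * (h1 * s2 - h2 * s1))); [ring | by rewrite z0 mulr0 ].
  + apply: (eq_trans (_ : _ = mu * (h2 * s0 - h0 * s2))); [ring | by rewrite z1 mulr0 ].
  + apply: (eq_trans (_ : _ = mu * (h0 * s1 - h1 * s0))); [ring | by rewrite z2 mulr0].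
- case=> p0 p1 p2.
  have z0 : h1 * s2 - h2 * s1 = 0.
    by apply/M; rewrite -p0; ring.
  have z1 : h2 * s0 - h0 * s2 = 0.
    by apply/M; rewrite -p1; ring.
  have z2 : h0 * s1 - h1 * s0 = 0.
    by apply/M; rewrite -p2; ring.
  have [w0 [w1 w2]] := cA2 (conj z0 (conj z1 z2)).
  split.
  + by rewrite -w0; ring.
  + by rewrite -w1; ring.
  + by rewrite -w2; ring.
Qed.
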